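(* Let $\Gamma$ be a finite graph and $R(\Gamma)$ its right angled Artin group. Then $m(R(\Gamma))=2$ (equivalently, $m_p(R(\Gamma))=2$ for every characteristic $p$) if and only if the graph obtained from $\Gamma$ by removing all vertices that are adjacent to every other vertex (together with their incident edges) has at least two connected components, each of which is a complete graph.
   Context: For a finite simple graph $\Gamma$, the right angled Artin group $R(\Gamma)$ has one generator for each vertex of $\Gamma$ and relations saying that the generators of adjacent vertices commute. For a group $G$ and $p$ zero or a prime, $m_p(G)$ is the minimal $d$ such that $G$ embeds in $GL(d,\mathbb{F})$ for some field $\mathbb{F}$ of characteristic $p$ ($\infty$ if none), and $m(G)=\min_p m_p(G)$. *)

(* Defs.v *)
From Stdlib Require Import Relations.
From mathcomp Require Import all_boot all_order all_algebra.
Set Implicit Arguments. Unset Strict Implicit. Unset Printing Implicit Defensive.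
Import GRing.Theory.
Local Open Scope ring_scope.

(* A finite simple graph: vertex type V : finType, adjacency e : rel V,
   symmetric and irreflexive (these are hypotheses of the theorem). *)

(* Words in the generators of R(Gamma) and their inverses:
   (v, true) is the generator v, (v, false) its inverse. *)
Definition letter (V : Type) := (V * bool)%type.
Definition word (V : Type) := seq (letter V).

Inductive raag_step (V : Type) (e : V -> V -> bool) : word V -> word V -> Prop :=
  | raag_cancel (u w : word V) (x : V) (b : bool) :
      raag_step e (u ++ [:: (x, b); (x, ~~ b)] ++ w) (u ++ w)
  | raag_swap (u w : word V) (x y : V) (b c : bool) :
      e x y ->
      raag_step e (u ++ [:: (x, b); (y, c)] ++ w) (u ++ [:: (y, c); (x, b)] ++ w).

Definition raag_eq (V : Type) (e : V -> V -> bool) : word V -> word V -> Prop :=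
  clos_refl_sym_trans (word V) (raag_step e).

Definition eval_word (F : fieldType) (d : nat) (V : Type)
    (rho : V -> 'M[F]_d) (w : word V) : 'M[F]_d :=
  foldr (fun l M => (if l.2 then rho l.1 else invmx (rho l.1)) *m M) 1%:M w.

Definition raag_embeds (V : finType) (e : rel V) (F : fieldType) (d : nat) : Prop :=
  exists rho : V -> 'M[F]_d,
    [/\ forall v, rho v \in unitmx,
        forall x y, e x y -> rho x *m rho y = rho y *m rho x
      & forall w : word V, eval_word rho w = 1%:M -> raag_eq e w [::]].

(* m(R(Gamma)) = d : d is the least dimension such that R(Gamma) embeds in
   GL(d, F) for some field F (of any characteristic). *)
Definition raag_m_eq (V : finType) (e : rel V) (d : nat) : Prop :=
  (exists F : fieldType, raag_embeds e F d) /\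
  (forall d' : nat, (d' < d)%N -> forall F : fieldType, ~ raag_embeds e F d').

Definition central_vertex (V : finType) (e : rel V) (v : V) : bool :=
  [forall u, (u != v) ==> e v u].

Definition core_vertices (V : finType) (e : rel V) : {set V} :=
  [set v | ~~ central_vertex e v].

Definition core_rel (V : finType) (e : rel V) : rel V :=
  [rel x y | [&& e x y, x \in core_vertices e & y \in core_vertices e]].

Definition core_condition (V : finType) (e : rel V) : Prop :=
  (exists x y, [/\ x \in core_vertices e, y \in core_vertices e
                 & ~~ connect (core_rel e) x y]) /\
  (forall x y, x \in core_vertices e -> y \in core_vertices e ->
     x != y -> connect (core_rel e) x y -> e x y).

(* Main.v *)
Require Import Defs.
From Stdlib Require Import Relations.
From mathcomp Require Import all_boot all_order all_algebra.
From mathcomp Require Import ring lra zify.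
Set Implicit Arguments. Unset Strict Implicit. Unset Printing Implicit Defensive.
Import GRing.Theory Num.Theory.
Local Open Scope ring_scope.


Definition mx2 (R : nzRingType) (a b c d : R) : 'M[R]_2 :=
  \matrix_(i < 2, j < 2)
    if i == 0 :> nat then (if j == 0 :> nat then a else b)
    else (if j == 0 :> nat then c else d).

Lemma mul_mx2 (R : nzRingType) (a b c d a' b' c' d' : R) :
  mx2 a b c d *m mx2 a' b' c' d' =
  mx2 (a * a' + b * c') (a * b' + b * d') (c * a' + d * c') (c * b' + d * d').
Proof.
apply/matrixP => i j; rewrite /mx2 !mxE !big_ord_recl big_ord0 !mxE addr0.
by case: i => [[|[|//]] Hi]; case: j => [[|[|//]] Hj].
Qed.

Lemma mx2_eta (R : nzRingType) (X : 'M[R]_2) : X = mx2 (X 0 0) (X 0 1) (X 1 0) (X 1 1).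
Proof.
apply/matrixP => i j; rewrite !mxE.
case: i => [[|[|//]] Hi]; case: j => [[|[|//]] Hj] /=; congr (X _ _); exact: val_inj.
Qed.

Lemma mx2_1 (R : nzRingType) : 1%:M = mx2 (1 : R) 0 0 1.
Proof.
apply/matrixP => i j; rewrite !mxE.
by case: i => [[|[|//]] Hi]; case: j => [[|[|//]] Hj].
Qed.

Lemma mx2_inj (R : nzRingType) (a b c d a' b' c' d' : R) :
  mx2 a b c d = mx2 a' b' c' d' -> [/\ a = a', b = b', c = c' & d = d'].
Proof.
move=> h.
have h00 := congr1 (fun M : 'M[R]_2 => M 0 0) h.
have h01 := congr1 (fun M : 'M[R]_2 => M 0 1) h.
have h10 := congr1 (fun M : 'M[R]_2 => M 1 0) h.
have h11 := congr1 (fun M : 'M[R]_2 => M 1 1) h.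
by move: h00 h01 h10 h11; rewrite !mxE /=.
Qed.

Lemma cent2 (F : fieldType) (A B C : 'M[F]_2) : ~~ is_scalar_mx B ->
  A *m B = B *m A -> C *m B = B *m C -> A *m C = C *m A.
Proof.
rewrite (mx2_eta A) (mx2_eta B) (mx2_eta C).
move: (A 0 0) (A 0 1) (A 1 0) (A 1 1) => a1 a2 a3 a4.
move: (B 0 0) (B 0 1) (B 1 0) (B 1 1) => p q r s.
move: (C 0 0) (C 0 1) (C 1 0) (C 1 1) => c1 c2 c3 c4.
move=> nsc; rewrite !mul_mx2 => /mx2_inj [E1 E2 E3 E4] /mx2_inj [G1 G2 G3 G4].
have [q0|qn0] := eqVneq q 0; last first.
  have ea3 : a3 = (a1 * p + a2 * r - p * a1) / q by rewrite E1; field; exact: qn0.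
  have ea1 : a1 = (p * a2 + q * a4 - a2 * s) / q by rewrite -E2; field; exact: qn0.
  have ec3 : c3 = (c1 * p + c2 * r - p * c1) / q by rewrite G1; field; exact: qn0.
  have ec1 : c1 = (p * c2 + q * c4 - c2 * s) / q by rewrite -G2; field; exact: qn0.
  by rewrite ea3 ec3 ea1 ec1; congr mx2; field.
have [r0|rn0] := eqVneq r 0; last first.
  have ea2 : a2 = (p * a1 + q * a3 - a1 * p) / r by rewrite -E1; field; exact: rn0.
  have ea1 : a1 = (a3 * p + a4 * r - s * a3) / r by rewrite E3; field; exact: rn0.
  have ec2 : c2 = (p * c1 + q * c3 - c1 * p) / r by rewrite -G1; field; exact: rn0.
  have ec1 : c1 = (c3 * p + c4 * r - s * c3) / r by rewrite G3; field; exact: rn0.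
  by rewrite ea2 ec2 ea1 ec1 q0; congr mx2; field.
have psn0 : p - s != 0.
  rewrite subr_eq0; apply: contra nsc => /eqP ps.
  apply/is_scalar_mxP; exists s; rewrite q0 r0 ps; apply/matrixP => i j; rewrite /mx2 !mxE.
  by case: i => [[|[|//]] Hi]; case: j => [[|[|//]] Hj].
have ea2 : a2 = (a1 * q + a2 * s - q * a4 - a2 * s) / (p - s).
  by rewrite E2; field; exact: psn0.
have ea3 : a3 = (r * a1 + s * a3 - a4 * r - s * a3) / (p - s).
  by rewrite -E3; field; exact: psn0.
have ec2 : c2 = (c1 * q + c2 * s - q * c4 - c2 * s) / (p - s).
  by rewrite G2; field; exact: psn0.
have ec3 : c3 = (r * c1 + s * c3 - c4 * r - s * c3) / (p - s).
  by rewrite -G3; field; exact: psn0.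
by rewrite ea2 ec2 ea3 ec3 q0 r0; congr mx2; field.
Qed.


Section Raag.
Variables (V : finType) (e : rel V).
Hypotheses (e_sym : symmetric e) (e_irr : irreflexive e).

Lemma step_ctx u w a b : raag_step e a b -> raag_step e (u ++ a ++ w) (u ++ b ++ w).
Proof.
case=> [u' w' x c|u' w' x y c d exy].
  have -> : u ++ (u' ++ [:: (x, c); (x, ~~ c)] ++ w') ++ w
     = (u ++ u') ++ [:: (x, c); (x, ~~ c)] ++ (w' ++ w) by rewrite -!catA.
  have -> : u ++ (u' ++ w') ++ w = (u ++ u') ++ (w' ++ w) by rewrite -!catA.
  exact: raag_cancel.
have -> : u ++ (u' ++ [:: (x, c); (y, d)] ++ w') ++ w
     = (u ++ u') ++ [:: (x, c); (y, d)] ++ (w' ++ w) by rewrite -!catA.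
have -> : u ++ (u' ++ [:: (y, d); (x, c)] ++ w') ++ w
     = (u ++ u') ++ [:: (y, d); (x, c)] ++ (w' ++ w) by rewrite -!catA.
exact: raag_swap.
Qed.

Lemma req_refl a : raag_eq e a a. Proof. exact: rst_refl. Qed.
Lemma req_sym a b : raag_eq e a b -> raag_eq e b a. Proof. exact: rst_sym. Qed.
Lemma req_trans a b c : raag_eq e a b -> raag_eq e b c -> raag_eq e a c.
Proof. exact: rst_trans. Qed.

Lemma req_ctx u w a b : raag_eq e a b -> raag_eq e (u ++ a ++ w) (u ++ b ++ w).
Proof.
elim=> [x y s|x|x y _ IH|x y z _ IH1 _ IH2].
- by apply: rst_step; apply: step_ctx.
- exact: rst_refl.
- exact: rst_sym.
- exact: rst_trans IH2.
Qed.

Lemma req_cat a b c d : raag_eq e a b -> raag_eq e c d -> raag_eq e (a ++ c) (b ++ d).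
Proof.
move=> Hab Hcd; apply: (@req_trans _ (b ++ c)).
  by have := req_ctx [::] c Hab.
by have := req_ctx b [::] Hcd; rewrite !cats0.
Qed.

Lemma req_cons l a b : raag_eq e a b -> raag_eq e (l :: a) (l :: b).
Proof. by move=> H; have := req_cat (req_refl [:: l]) H. Qed.

Definition lc (l l' : letter V) := (l.1 == l'.1) || e l.1 l'.1.

Lemma lcC l l' : lc l l' = lc l' l.
Proof. by rewrite /lc eq_sym e_sym. Qed.

Lemma req_swap u w l l' : lc l l' -> raag_eq e (u ++ l :: l' :: w) (u ++ l' :: l :: w).
Proof.
case: l l' => [x b] [y c]; rewrite /lc /= => /orP [/eqP <-|exy].
  case: (boolP (b == c)) => [/eqP <-|nbc]; first exact: req_refl.
  have hc : c = ~~ b by move: b c nbc => [] [].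
  subst c; apply: (@req_trans _ (u ++ w)).
    by apply: rst_step; exact: (raag_cancel e u w x b).
  apply: rst_sym; apply: rst_step.
  have := raag_cancel e u w x (~~ b); by rewrite negbK.
by apply: rst_step; exact: (raag_swap u w b c exy).
Qed.

Lemma req_move l u w : all (lc l) u -> raag_eq e (u ++ l :: w) (l :: u ++ w).
Proof.
elim: u => [|x u IH] /=; first by move=> _; exact: req_refl.
case/andP=> hl hu; apply: (@req_trans _ (x :: l :: u ++ w)).
  exact: req_cons (IH hu).
by have := req_swap [::] (u ++ w) (_ : lc x l); apply; rewrite lcC.
Qed.

Definition evalL (R : ringType) n (L : letter V -> 'M[R]_n) (w : word V) : 'M[R]_n :=
  foldr (fun l M => L l *m M) 1%:M w.

Lemma evalL_cat (R : ringType) n (L : letter V -> 'M[R]_n) a b :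
  evalL L (a ++ b) = evalL L a *m evalL L b.
Proof.
elim: a => [|l a IH] /=; first by rewrite mul1mx.
by rewrite IH mulmxA.
Qed.

Lemma evalL_eq (R : ringType) n (L : letter V -> 'M[R]_n)
  (Hinv : forall x b, L (x, b) *m L (x, ~~ b) = 1%:M)
  (Hcomm : forall x y b c, e x y -> L (x, b) *m L (y, c) = L (y, c) *m L (x, b))
  a b : raag_eq e a b -> evalL L a = evalL L b.
Proof.
elim=> [x y []|x|x y _ IH|x y z _ IH1 _ IH2] //.
- move=> u w v c; rewrite !evalL_cat /= mulmx1 Hinv mul1mx //.
- move=> u w v v' c d evv; rewrite !evalL_cat /= !mulmx1 (Hcomm _ _ _ _ evv) //.
- by rewrite IH1 IH2.
Qed.

Lemma comm_inv (F : fieldType) d (A B : 'M[F]_d) : A \in unitmx ->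
  A *m B = B *m A -> invmx A *m B = B *m invmx A.
Proof.
move=> uA AB.
rewrite -[X in X = _]mulmx1 -(mulmxV uA) mulmxA -(mulmxA (invmx A)) -AB mulmxA.
by rewrite mulVmx // mul1mx.
Qed.

Lemma eval_word_eq (F : fieldType) d (rho : V -> 'M[F]_d)
  (Hu : forall v, rho v \in unitmx)
  (Hc : forall x y, e x y -> rho x *m rho y = rho y *m rho x) a b :
  raag_eq e a b -> eval_word rho a = eval_word rho b.
Proof.
apply: (@evalL_eq F d (fun l => if l.2 then rho l.1 else invmx (rho l.1))).
  by move=> x [] /=; [rewrite mulmxV | rewrite mulVmx].
move=> x y [] [] exy /=.
- exact: Hc.
- by rewrite (comm_inv (Hu y) (esym (Hc _ _ exy))).
- by rewrite (comm_inv (Hu x) (Hc _ _ exy)).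
- have h1 := comm_inv (Hu x) (Hc _ _ exy).
  by rewrite (comm_inv (Hu y) (esym h1)).
Qed.


Definition mA : 'M[rat]_2 := mx2 1 1 0 1.
Definition mAi : 'M[rat]_2 := mx2 1 (-1) 0 1.
Definition mB : 'M[rat]_2 := mx2 1 0 1 1.
Definition mBi : 'M[rat]_2 := mx2 1 0 (-1) 1.

Definition Lxy (x y : V) (l : letter V) : 'M[rat]_2 :=
  if l.1 == x then (if l.2 then mA else mAi)
  else if l.1 == y then (if l.2 then mB else mBi) else 1%:M.

Lemma Lxy_eq x y a b : ~~ e x y -> raag_eq e a b -> evalL (Lxy x y) a = evalL (Lxy x y) b.
Proof.
move=> nxy; apply: evalL_eq.
  move=> v [] /=; rewrite /Lxy /=; case: (v == x); case: (v == y);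
  rewrite ?mulmx1 // /mA /mAi /mB /mBi mul_mx2 mx2_1; congr mx2; ring.
move=> u w b0 c0 euw; rewrite /Lxy /=.
have [ux|ux] := eqVneq u x.
  subst u; have [wx|wx] := eqVneq w x; first by subst; rewrite e_irr in euw.
  have [wy|wy] := eqVneq w y; first by subst; rewrite euw in nxy.
  by rewrite mulmx1 mul1mx.
have [uy|uy] := eqVneq u y.
  subst u; have [wx|wx] := eqVneq w x; first by subst; rewrite e_sym euw in nxy.
  have [wy|wy] := eqVneq w y; first by subst; rewrite e_irr in euw.
  by rewrite mulmx1 mul1mx.
by rewrite mulmx1 mul1mx.
Qed.

Lemma nontriv1 x : ~ raag_eq e [:: (x, true)] [::].
Proof.
move=> h; have := Lxy_eq (negbT (e_irr x)) h; rewrite /= /Lxy /= eqxx mulmx1 /mA mx2_1.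
by case/mx2_inj.
Qed.

Lemma nontriv2 x y : x != y -> ~~ e x y ->
  ~ raag_eq e [:: (x, true); (y, true); (x, false); (y, false)] [::].
Proof.
move=> nxy nexy h; have := Lxy_eq nexy h; rewrite /= /Lxy /= eqxx eq_sym (negbTE nxy) eqxx.
rewrite mulmx1 /mA /mB /mAi /mBi !mul_mx2 mx2_1 => /mx2_inj [_ _ _].
move/eqP; rewrite -subr_eq0; apply/negP.
rewrite !(mul1r, mulr1, mul0r, mulr0, addr0, add0r).
by rewrite oppr_eq0 oner_eq0.
Qed.

End Raag.


Fixpoint Pn (n : nat) : nat :=
  if n is n'.+1 then s2val (prime_above (Pn n')) else 2.

Lemma Pn_prime n : prime (Pn n).
Proof. by case: n => [|n] //=; case: (prime_above _). Qed.

Lemma Pn_lt m n : (m < n)%N -> (Pn m < Pn n)%N.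
Proof.
elim: n => [|n IH] //; rewrite ltnS leq_eqVlt => /orP [/eqP ->|lt].
  by rewrite /=; case: (prime_above _).
apply: ltn_trans (IH lt) _; by rewrite /=; case: (prime_above _).
Qed.

Lemma Pn_inj : injective Pn.
Proof.
move=> m n h; case: (ltngtP m n) => // lt.
  by have := Pn_lt lt; rewrite h ltnn.
by have := Pn_lt lt; rewrite h ltnn.
Qed.

Section Abel.
Variables (V : finType) (e : rel V).
Hypotheses (e_sym : symmetric e) (e_irr : irreflexive e).

Definition pr (v : V) : nat := Pn (enum_rank v).

Lemma pr_prime v : prime (pr v). Proof. exact: Pn_prime. Qed.
Lemma pr_inj : injective pr.
Proof. by move=> u v /Pn_inj /ord_inj /enum_rank_inj. Qed.

Definition ev (x : V) (l : letter V) : int :=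
  if l.1 == x then (if l.2 then 1 else -1) else 0.
Definition expv (x : V) (w : word V) : int := \sum_(l <- w) ev x l.

Definition pv (l : letter V) : rat :=
  if l.2 then (pr l.1)%:R else ((pr l.1)%:R)^-1.
Definition prodval (w : word V) : rat := \prod_(l <- w) pv l.

Lemma pr_neq0 v : (pr v)%:R != 0 :> rat.
Proof. by rewrite pnatr_eq0 -lt0n prime_gt0 // pr_prime. Qed.

Lemma ND (w : word V) : exists N D : nat, [/\ (0 < N)%N, (0 < D)%N,
   prodval w = N%:R / D%:R &
   forall u, (logn (pr u) N)%:Z - (logn (pr u) D)%:Z = expv u w].
Proof.
elim: w => [|[v b] w [N [D [N0 D0 hP hL]]]].
  exists 1%N, 1%N; split => //; first by rewrite /prodval big_nil divr1.
  by move=> u; rewrite /expv big_nil logn1.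
have pv0 : (0 < pr v)%N by rewrite prime_gt0 // pr_prime.
case: b.
  exists (pr v * N)%N, D; split => //; first by rewrite muln_gt0 pv0.
    by rewrite /prodval big_cons -/(prodval w) hP /pv /= natrM mulrA.
  move=> u; rewrite /expv big_cons -/(expv u w) -hL lognM // (logn_prime _ (pr_prime v)).
  rewrite /ev /= (inj_eq pr_inj) eq_sym; case: (v == u) => /=; lia.
exists N, (pr v * D)%N; split => //; first by rewrite muln_gt0 pv0.
  rewrite /prodval big_cons -/(prodval w) hP /pv /= natrM.
  rewrite invfM mulrCA mulrA //.
move=> u; rewrite /expv big_cons -/(expv u w) -hL lognM // (logn_prime _ (pr_prime v)).
rewrite /ev /= (inj_eq pr_inj) eq_sym; case: (v == u) => /=; lia.
Qed.

Lemma prodval1 w : prodval w = 1 -> forall u, expv u w = 0.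
Proof.
have [N [D [N0 D0 hP hL]]] := ND w.
rewrite hP => h u; rewrite -hL.
have hD : D%:R != 0 :> rat by rewrite pnatr_eq0 -lt0n.
have : N%:R = D%:R :> rat by rewrite -[LHS](mulfVK hD) h mul1r.
by move/eqP; rewrite eqr_nat => /eqP ->; rewrite subrr.
Qed.

Lemma exp_sign v b w : (v, ~~ b) \notin w ->
  if b then 0 <= expv v w else expv v w <= 0.
Proof.
elim: w => [|[x c] w IH]; first by rewrite /expv big_nil; case: b.
rewrite in_cons negb_or => /andP [hne /IH {}IH].
rewrite /expv big_cons -/(expv v w) /ev /=.
have [xv|xv] := eqVneq x v; last by rewrite add0r.
subst x; have hc : c = b.
  by move: hne IH; case: b; case: c; rewrite ?eqxx.
subst c; clear hne; move: IH; case: b => /= IH; lia.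
Qed.

Lemma abel_triv w : (forall l l', l \in w -> l' \in w -> lc e l l') ->
  (forall u, expv u w = 0) -> raag_eq e w [::].
Proof.
move: {2}(size w) (leqnn (size w)) => n; elim: n w => [|n IH] [|[v b] w] //= hs hc hz;
  try exact: req_refl.
have hin : (v, ~~ b) \in w.
  apply/negPn/negP => hn; have := hz v; have := exp_sign hn.
  rewrite /expv big_cons -/(expv v w) /ev /= eqxx.
  by case: (b) => /= h1 h2; lia.
case/splitPr: hin hs hc hz => u w' hs hc hz.
apply: req_trans (req_cons (v, b) (@req_move _ _ e_sym (v, ~~ b) u w' _)) _.
  apply/allP => l hl; apply: hc; rewrite ?inE ?mem_cat ?inE ?hl ?eqxx ?orbT //.
have hcan : raag_eq e ((v, b) :: (v, ~~ b) :: u ++ w') (u ++ w').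
  by apply: rst_step; exact: (raag_cancel e [::] (u ++ w') v b).
apply: req_trans hcan _.
apply: IH.
- by move: hs; rewrite !size_cat /=; lia.
- move=> l l' hl hl'; apply: hc; rewrite inE mem_cat inE.
    by move: hl; rewrite mem_cat => /orP [->|->]; rewrite ?orbT.
  by move: hl'; rewrite mem_cat => /orP [->|->]; rewrite ?orbT.
- move=> x; have := hz x; rewrite /expv big_cons big_cat big_cons big_cat /=.
  by rewrite /ev /=; case: (v == x); case: (b) => /=; lia.
Qed.
End Abel.


Notation PR := {poly rat}.

Definition Mc (c : rat) (f : PR) : 'M[PR]_2 :=
  mx2 (1 + c%:P * f) (- (c%:P ^+ 2) * f) f (1 - c%:P * f).

Lemma Mc_add c f g : Mc c f *m Mc c g = Mc c (f + g).
Proof. rewrite /Mc mul_mx2; congr mx2; ring. Qed.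

Lemma Mc0 c : Mc c 0 = 1%:M.
Proof. rewrite /Mc mx2_1; congr mx2; ring. Qed.

Lemma mx2E (R : nzRingType) (a b c d : R) :
  [/\ mx2 a b c d 0 0 = a, mx2 a b c d 0 1 = b, mx2 a b c d 1 0 = c & mx2 a b c d 1 1 = d].
Proof. by rewrite !mxE. Qed.

Definition uX (c : rat) (X : 'M[PR]_2) := X 0 0 - c%:P * X 1 0.
Definition Start (c : rat) (X : 'M[PR]_2) :=
  (uX c X != 0) && leq (size (X 1 0)) (size (uX c X)).
Definition Good (c : rat) (X : 'M[PR]_2) :=
  (uX c X != 0) && leq (size (uX c X)).+1 (size (X 1 0)).

Lemma start1 c : Start c 1%:M.
Proof.
rewrite /Start /uX !mxE /= mulr0 subr0 oner_eq0 /=.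
by rewrite size_poly0.
Qed.

Lemma good_ne0 c X : Good c X -> X 1 0 != 0.
Proof.
case/andP=> _ h; apply/eqP => h0; move: h; by rewrite h0 size_poly0.
Qed.

Lemma mul2E (R : nzRingType) (A B : 'M[R]_2) i j :
  (A *m B) i j = A i 0 * B 0 j + A i 1 * B 1 j.
Proof.
rewrite mxE !big_ord_recl big_ord0 addr0.
have e1 : lift ord0 (ord0 : 'I_1) = (1 : 'I_2) by apply: val_inj.
by rewrite e1.
Qed.

Lemma natA (x y z : nat) : (1 < x)%N -> (z <= y)%N -> (z < x + y - 1)%N.
Proof. lia. Qed.

Lemma pp_step c (f : PR) X : Start c X -> (2 <= size f)%N -> Good c (Mc c f *m X).
Proof.
rewrite /Start /Good /uX !mul2E /Mc.
case: (mx2E (1 + c%:P * f) (- (c%:P ^+ 2) * f) f (1 - c%:P * f)) => -> -> -> ->.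
set a := X 0 0; set b := X 1 0.
have -> : (1 + c%:P * f) * a + - (c%:P ^+ 2) * f * b - c%:P * (f * a + (1 - c%:P * f) * b)
   = a - c%:P * b by ring.
have -> : f * a + (1 - c%:P * f) * b = f * (a - c%:P * b) + b by ring.
set u : PR := a - c%:P * b.
case/andP=> un0 hs hf; rewrite un0 /=.
have f0 : f != 0 by rewrite -size_poly_gt0; apply: leq_trans hf.
have hfu : size (f * u) = (size f + size u).-1 by rewrite size_mul.
have hu0 : (0 < size u)%N by rewrite size_poly_gt0.
clearbody u; rewrite size_polyDl hfu. all: rewrite ?hfu -?subn1.
  exact: natA hf (leqnn _).
exact: natA hf hs.
Qed.

Lemma pp_switch c c' X : Good c X -> c != c' -> Start c' X.
Proof.
rewrite /Start /Good /uX; case/andP=> un0 hs hc.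
have -> : X 0 0 - c'%:P * X 1 0 = (c - c')%:P * X 1 0 + (X 0 0 - c%:P * X 1 0).
  by rewrite polyCB; ring.
have hcc : c - c' != 0 by rewrite subr_eq0.
have hsz : size ((c - c')%:P * X 1 0 + (X 0 0 - c%:P * X 1 0)) = size (X 1 0).
  by rewrite size_polyDl size_Cmul.
rewrite -size_poly_gt0 hsz leqnn andbT.
exact: leq_ltn_trans (leq0n _) hs.
Qed.


Section Emb2.
Variables (V : finType) (e : rel V).
Hypotheses (e_sym : symmetric e) (e_irr : irreflexive e).
Hypothesis hcl : forall x y, x \in core_vertices e -> y \in core_vertices e ->
     x != y -> connect (core_rel e) x y -> e x y.

Definition isC (l : letter V) := central_vertex e l.1.
Definition key (v : V) := fingraph.root (core_rel e) v.
Definition cenk (k : V) : rat := (enum_rank k : nat)%:R.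
Definition idx (v : V) : nat := enum_rank v.
Definition tX (v : V) : PR := 'X^(S (idx v)).
Definition sgX (l : letter V) : PR := if l.2 then tX l.1 else - tX l.1.
Definition letterP (l : letter V) : 'M[PR]_2 :=
  if isC l then ((pv l)%:P)%:M else Mc (cenk (key l.1)) (sgX l).

Lemma cr_sym : symmetric (core_rel e).
Proof. by move=> x y; rewrite /core_rel /= e_sym; case: (e y x); case: (x \in _); case: (y \in _). Qed.

Lemma csym : connect_sym (core_rel e).
Proof. exact: sym_connect_sym cr_sym. Qed.

Lemma nc_core v : ~~ central_vertex e v -> v \in core_vertices e.
Proof. by rewrite inE. Qed.

Lemma key_edge u v : ~~ central_vertex e u -> ~~ central_vertex e v -> e u v -> key u = key v.
Proof.
move=> cu cv euv; apply/eqP; rewrite /key (root_connect csym).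
by apply: connect1; rewrite /core_rel /= euv !nc_core.
Qed.

Lemma key_lc l l' : ~~ isC l -> ~~ isC l' -> key l.1 = key l'.1 -> lc e l l'.
Proof.
move=> cl cl' /eqP; rewrite /key (root_connect csym) => hc.
rewrite /lc; have [->|ne] := eqVneq l.1 l'.1; first by [].
by rewrite /= hcl // nc_core.
Qed.

Lemma central_lc l x : isC x -> lc e l x.
Proof.
rewrite /isC /central_vertex => /forallP h; rewrite /lc.
have [//|ne] := eqVneq l.1 x.1; rewrite /= e_sym.
by have := h l.1; rewrite ne.
Qed.

Lemma pv_inv (x : V) b : pv (x, b) * pv (x, ~~ b) = 1.
Proof.
by rewrite /pv; case: b => /=; [rewrite mulfV | rewrite mulVf]; rewrite // pr_neq0.
Qed.

Lemma letterP_inv (x : V) b : letterP (x, b) *m letterP (x, ~~ b) = 1%:M.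
Proof.
rewrite /letterP /isC /=; case: (central_vertex e x).
  by rewrite -scalar_mxM -polyCM pv_inv.
by rewrite Mc_add /sgX /=; case: b => /=; rewrite ?subrr ?addNr Mc0.
Qed.

Lemma letterP_comm (x y : V) b c : e x y ->
  letterP (x, b) *m letterP (y, c) = letterP (y, c) *m letterP (x, b).
Proof.
move=> exy; rewrite /letterP /isC /=.
case: (boolP (central_vertex e x)) => cx; first by rewrite scalar_mxC.
case: (boolP (central_vertex e y)) => cy; first by rewrite scalar_mxC.
by rewrite (key_edge cx cy exy) !Mc_add addrC.
Qed.

Lemma evalP_eq a b : raag_eq e a b -> evalL letterP a = evalL letterP b.
Proof. apply: evalL_eq; [exact: letterP_inv | exact: letterP_comm]. Qed.


Lemma split_cs w : exists c s, [/\ raag_eq e w (c ++ s), all isC c, all (predC isC) s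
   & (size c + size s = size w)%N].
Proof.
elim: w => [|l w [c [s [h1 h2 h3 h4]]]].
  by exists [::], [::]; split => //; exact: req_refl.
case: (boolP (isC l)) => cl.
  exists (l :: c), s; split => //=; [exact: req_cons | by rewrite cl h2 | by rewrite -h4].
exists c, (l :: s); split => //=; [|by rewrite cl h3 | by rewrite addnS h4].
apply: req_trans (req_cons l h1) _.
apply: req_sym; apply: (req_move e_sym); apply/allP => x hx; apply: central_lc.
exact: (allP h2).
Qed.

Definition kl (l : letter V) := key l.1.
Definition blk_ok (kb : V * word V) := (kb.2 != [::]) && all (fun l => kl l == kb.1) kb.2.
Definition krel (x y : V * word V) := x.1 != y.1.

Lemma blocks s : exists bs : seq (V * word V),
  [/\ s = flatten (map snd bs), all blk_ok bs & sorted krel bs].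
Proof.
elim: s => [|l s [bs [-> h2 h3]]]; first by exists [::].
case: bs h2 h3 => [|[k b] bs] h2 h3.
  by exists [:: (kl l, [:: l])]; rewrite /blk_ok /= eqxx.
have [hk|hk] := eqVneq (kl l) k.
  exists ((k, l :: b) :: bs); split => //.
    by move: h2 => /= /andP [/andP [_ hb] ->]; rewrite /blk_ok /= hk eqxx hb.
  by case: bs h3 {h2}.
exists ((kl l, [:: l]) :: (k, b) :: bs); split => //=.
  by move: h2 => /= ->; rewrite /blk_ok /= eqxx.
by rewrite {1}/krel /= hk.
Qed.

Definition fsum (b : word V) : PR := \sum_(l <- b) sgX l.

Lemma eval_blk k b : all (fun l => ~~ isC l && (kl l == k)) b ->
  evalL letterP b = Mc (cenk k) (fsum b).
Proof.
elim: b => [|l b IH] /=; first by rewrite /fsum big_nil Mc0.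
case/andP=> /andP [cl /eqP hc] hb.
by rewrite IH // /letterP (negbTE cl) -/(kl l) hc Mc_add /fsum big_cons.
Qed.

Lemma idx_eq u v : (idx u == idx v) = (u == v).
Proof. by rewrite /idx (inj_eq val_inj) (inj_eq enum_rank_inj). Qed.

Lemma fsum_coef b u : (fsum b)`_(S (idx u)) = (expv u b)%:~R.
Proof.
elim: b => [|l b IH]; first by rewrite /fsum big_nil coef0 /expv big_nil.
rewrite /fsum big_cons coefD -/(fsum b) IH /expv big_cons intrD -/(expv u b).
congr (_ + _); case: l => [v bb]; rewrite /sgX /tX /ev /=.
case: bb; rewrite ?coefN coefXn eqSS idx_eq eq_sym; case: (v == u) => //=.
Qed.

Lemma fsum_coef0 b : (fsum b)`_0 = 0.
Proof.
elim: b => [|l b IH]; first by rewrite /fsum big_nil coef0.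
rewrite /fsum big_cons coefD -/(fsum b) IH addr0 /sgX /tX.
by case: (l.2); rewrite ?coefN coefXn /= ?oppr0.
Qed.

Lemma fsum_size b : ~~ [forall u, expv u b == 0] -> (2 <= size (fsum b))%N.
Proof.
apply: contraR; rewrite -ltnNge ltnS => /size1_polyC; rewrite fsum_coef0 => h0.
apply/forallP => u; have := fsum_coef b u; rewrite h0 coef0 => /esym /eqP.
by rewrite intr_eq0.
Qed.

Definition gblk (kb : V * word V) :=
  [&& blk_ok kb, all (predC isC) kb.2 & ~~ [forall u, expv u kb.2 == 0]].

Lemma cenk_inj k k' : k != k' -> cenk k != cenk k'.
Proof.
apply: contra; rewrite /cenk eqr_nat => /eqP h.
by apply/eqP; apply: enum_rank_inj; apply: val_inj.
Qed.

Lemma pp bs k0 b0 : all gblk ((k0, b0) :: bs) -> sorted krel ((k0, b0) :: bs) ->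
  Good (cenk k0) (evalL letterP (flatten (map snd ((k0, b0) :: bs)))).
Proof.
elim: bs k0 b0 => [|[k1 b1] bs IH] k0 b0 /=.
  case/andP=> /and3P [/andP [_ hk] hc hz] _ _.
  rewrite cats0 (@eval_blk k0); last first.
    apply/allP => l hl; rewrite (allP hk _ hl) andbT; exact: (allP hc _ hl).
  by rewrite -[Mc _ _]mulmx1; apply: pp_step; [exact: start1 | exact: fsum_size].
case/andP=> /and3P [/andP [_ hk] hc hz] hall /andP [hkr hsort].
rewrite evalL_cat (@eval_blk k0); last first.
  apply/allP => l hl; rewrite (allP hk _ hl) andbT; exact: (allP hc _ hl).
apply: pp_step; last exact: fsum_size.
apply: (@pp_switch (cenk k1)); first exact: IH.
by rewrite cenk_inj // eq_sym.
Qed.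

Lemma eval_central c : all isC c -> evalL letterP c = ((prodval c)%:P)%:M.
Proof.
elim: c => [|l c IH] /=; first by rewrite /prodval big_nil.
case/andP=> cl hc; rewrite IH // /letterP cl /prodval big_cons.
by rewrite polyCM scalar_mxM.
Qed.

Lemma prodval_neq0 (c : word V) : prodval c != 0.
Proof.
elim: c => [|l c IH]; first by rewrite /prodval big_nil oner_eq0.
rewrite /prodval big_cons mulf_neq0 // /pv.
by case: (l.2); rewrite ?invr_eq0 pr_neq0.
Qed.

Lemma faithP w : evalL letterP w = 1%:M -> raag_eq e w [::].
Proof.
move: {2}(size w) (leqnn (size w)) => n; elim: n w => [|n IH] w hsn hw.
  by move: hsn; rewrite leqn0 size_eq0 => /eqP ->; exact: req_refl.
have [c [s [hcs hc hs hsz]]] := split_cs w.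
have hw' : evalL letterP (c ++ s) = 1%:M by rewrite -(evalP_eq hcs).
have [bs [hsb hok hsort]] := blocks s.
case: (boolP (has (fun kb => [forall u, expv u kb.2 == 0]) bs)) => hz.
  case/hasP: hz => kb kbin /forallP hkb.
  have okb : blk_ok kb := allP hok _ kbin.
  case/splitPr: kbin hsb hok okb => bs1 bs2 hsb hok okb.
  have hsub : forall l, l \in kb.2 -> l \in s.
    by move=> l hl; rewrite hsb map_cat flatten_cat /= !mem_cat hl orbT.
  have hkb0 : raag_eq e kb.2 [::].
    apply: (abel_triv e_sym) => [l l' hl hl'|u]; last exact/eqP.
    case/andP: okb => _ /allP okb.
    apply: key_lc; [exact: (allP hs _ (hsub _ hl)) | exact: (allP hs _ (hsub _ hl'))|].
    by rewrite -/(kl l) -/(kl l') (eqP (okb _ hl)) (eqP (okb _ hl')).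
  set s' := flatten (map snd bs1) ++ flatten (map snd bs2).
  have hss : raag_eq e s s'.
    rewrite hsb map_cat flatten_cat /=.
    exact: (req_ctx (flatten (map snd bs1)) (flatten (map snd bs2)) hkb0).
  have hsz' : (size s' < size s)%N.
    rewrite hsb /s' map_cat !flatten_cat /= !size_cat.
    case/andP: okb => hne _; move: hne; rewrite -size_eq0 -lt0n => h.
    by rewrite ltn_add2l -[X in (X < _)%N]add0n ltn_add2r.
  have hcs' : raag_eq e (c ++ s) (c ++ s') := req_cat (req_refl e c) hss.
  have hev : evalL letterP (c ++ s') = 1%:M by rewrite -(evalP_eq hcs').
  apply: req_trans hcs _; apply: req_trans hcs' _.
  apply: IH hev.
  by rewrite size_cat -ltnS; apply: leq_trans hsn; rewrite -hsz ltn_add2l.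
case: bs hsb hok hsort hz => [|[k0 b0] bs] hsb hok hsort hz.
  move: hw'; rewrite hsb cats0 eval_central // => h.
  have h1 : (prodval c)%:P = 1%:P :> PR.
    by have := congr1 (fun M : 'M[PR]_2 => M 0 0) h; rewrite !mxE /= polyC1.
  have hp := prodval1 (polyC_inj h1).
  apply: req_trans hcs _; rewrite hsb cats0.
  apply: (abel_triv e_sym) => [l l' hl hl'|]; last exact: hp.
  by apply: central_lc; exact: (allP hc).
exfalso.
have hg : Good (cenk k0) (evalL letterP s).
  rewrite hsb; apply: pp => //; apply/allP => kb kbin; rewrite /gblk (allP hok _ kbin) /=.
  rewrite (hasPn hz _ kbin) andbT; apply/allP => l hl; apply: (allP hs).
  rewrite hsb; apply/flattenP; exists kb.2 => //; exact: map_f.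
have := good_ne0 hg; apply/negP; rewrite negbK.
have := congr1 (fun M : 'M[PR]_2 => M 1 0) hw'.
rewrite evalL_cat eval_central // mul_scalar_mx mxE /= => h.
by move: h; rewrite mxE /= => /eqP; rewrite mulf_eq0 polyC_eq0 (negbTE (prodval_neq0 c)).
Qed.

End Emb2.


Definition tf := @FracField.tofrac PR.

Lemma map_tf_inj (A B : 'M[PR]_2) : map_mx tf A = map_mx tf B -> A = B.
Proof.
move=> h; apply/matrixP => i j.
have := congr1 (fun M : 'M_2 => M i j) h; rewrite !mxE => /eqP.
by rewrite tofrac_eq => /eqP.
Qed.

Lemma inv_right (F : fieldType) n (A B : 'M[F]_n) : A *m B = 1%:M -> invmx A = B.
Proof.
move=> h; have [uA _] := mulmx1_unit h.
by rewrite -[LHS]mulmx1 -h mulmxA mulVmx // mul1mx.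
Qed.

Section Final.
Variables (V : finType) (e : rel V).
Hypotheses (e_sym : symmetric e) (e_irr : irreflexive e).

Lemma embed2 (hcl : forall x y, x \in core_vertices e -> y \in core_vertices e ->
     x != y -> connect (core_rel e) x y -> e x y) :
  raag_embeds e {fraction PR} 2.
Proof.
pose L := letterP e.
pose rho := fun v : V => map_mx tf (L (v, true)).
have hprod : forall v b, map_mx tf (L (v, b)) *m map_mx tf (L (v, ~~ b)) = 1%:M.
  by move=> v b; rewrite -map_mxM letterP_inv // map_mx1.
have hinv : forall v, invmx (rho v) = map_mx tf (L (v, false)).
  by move=> v; apply: inv_right; exact: (hprod v true).
have hu : forall v, rho v \in unitmx.
  by move=> v; rewrite /rho; exact: (mulmx1_unit (hprod v true)).1.
have hev : forall w, @eval_word {fraction PR} 2 V rho w = map_mx tf (evalL L w).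
  elim=> [|[v b] w IH]; first by rewrite map_mx1.
  have e1 : eval_word rho ((v, b) :: w) =
      (if b then rho v else invmx (rho v)) *m eval_word rho w by [].
  have e2 : evalL L ((v, b) :: w) = L (v, b) *m evalL L w by [].
  rewrite e1 e2 IH map_mxM; congr (_ *m _).
  by clear e1 e2; case: b; rewrite ?hinv.
exists rho; split => //.
  by move=> x y exy; rewrite -!map_mxM letterP_comm.
move=> w; rewrite hev -(map_mx1 tf) => /map_tf_inj.
exact: faithP.
Qed.

Lemma embed1 (hcomp : forall u v : V, u != v -> e u v) : raag_embeds e rat 1.
Proof.
pose rho := fun v : V => (((pr v)%:R : rat)%:M : 'M[rat]_1).
have hprod : forall v, rho v *m ((pr v)%:R^-1)%:M = 1%:M.
  by move=> v; rewrite -scalar_mxM mulfV // pr_neq0.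
have hu : forall v, rho v \in unitmx by move=> v; have [] := mulmx1_unit (hprod v).
have hev : forall w, eval_word rho w = (prodval w)%:M.
  elim=> [|[v b] w IH] /=; first by rewrite /prodval big_nil.
  rewrite /eval_word /= -/(eval_word rho w) IH /prodval big_cons -/(prodval w).
  by case: b; rewrite /pv /= ?invmx_scalar -scalar_mxM.
exists rho; split => //.
  by move=> x y _; rewrite scalar_mxC.
move=> w; rewrite hev => h.
have h1 : prodval w = 1.
  by have := congr1 (fun M : 'M[rat]_1 => M 0 0) h; rewrite !mxE.
apply: (abel_triv e_sym) => [l l' _ _|]; last exact: prodval1.
rewrite /lc; case: eqP => //= ne; apply: hcomp; exact/eqP.
Qed.


Lemma conn_adj (H3 : forall a b c, b \in core_vertices e -> e a b -> e b c -> a != c -> e a c)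
  x y : connect (core_rel e) x y -> x != y -> e x y.
Proof.
case/connectP => p hp ->; elim: p x hp => [|z p IH] x /=; first by rewrite eqxx.
case/andP=> hxz hp hne; move: hxz; rewrite /core_rel /= => /and3P [exz _ hz].
have [zy|zy] := eqVneq z (last z p); first by rewrite -zy.
exact: H3 hz exz (IH z hp zy) hne.
Qed.

Lemma comm_eval (F : fieldType) d (rho : V -> 'M[F]_d) x y :
  rho x \in unitmx -> rho y \in unitmx -> rho x *m rho y = rho y *m rho x ->
  eval_word rho [:: (x, true); (y, true); (x, false); (y, false)] = 1%:M.
Proof.
move=> ux uy hxy; rewrite /eval_word /= mulmx1 !mulmxA hxy.
by rewrite -(mulmxA (rho y)) mulmxV // mulmx1 mulmxV.
Qed.

End Final.


Theorem proposition3p1 (V : finType) (e : rel V)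
    (e_sym : symmetric e) (e_irr : irreflexive e) :
  raag_m_eq e 2 <-> core_condition e.
Proof.
split.
  case=> [[F [rho [hu hc hf]]] hno].
  have H3 : forall a b c, b \in core_vertices e -> e a b -> e b c -> a != c -> e a c.
    move=> a b c hb eab ebc nac; apply/negPn/negP => neac.
    move: hb; rewrite inE /central_vertex => /forallPn [d].
    rewrite negb_imply => /andP [ndb nebd].
    case: (boolP (is_scalar_mx (rho b))) => hsc.
      case/is_scalar_mxP: hsc => k hk.
      apply: (nontriv2 e_sym e_irr (x := b) (y := d)) => //; first by rewrite eq_sym.
      by apply: hf; apply: comm_eval => //; rewrite hk scalar_mxC.
    apply: (nontriv2 e_sym e_irr (x := a) (y := c)) => //.
    apply: hf; apply: comm_eval => //.
    apply: (cent2 hsc); first exact: hc.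
    by rewrite hc // e_sym.
  split; last first.
    by move=> x y _ _ nxy hcn; exact: conn_adj H3 _ _ hcn nxy.
  case: (pickP (mem (core_vertices e))) => [v hv|hnone].
    have hv' : ~~ central_vertex e v by move: hv; rewrite /= inE.
    move: (hv'); rewrite /central_vertex => /forallPn [u].
    rewrite negb_imply => /andP [nuv nevu].
    have hu' : u \in core_vertices e.
      rewrite inE /central_vertex; apply/negP => /forallP /(_ v).
      by rewrite eq_sym nuv /= e_sym (negbTE nevu).
    exists v, u; split => //; apply/negP => hcn.
    by move: nevu; rewrite (conn_adj H3 hcn) // eq_sym.
  exfalso; apply: (hno 1%N isT rat); apply: embed1 => // u v nuv.
  have := hnone u; rewrite /= inE => /negbFE; rewrite /central_vertex => /forallP /(_ v).
  by rewrite eq_sym nuv.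
case=> [[x [y [hx hy hnc]]] hcl].
have nxy : x != y by apply: contraNneq hnc => ->; exact: connect0.
have nexy : ~~ e x y.
  by apply: contra hnc => exy; apply: connect1; rewrite /core_rel /= exy hx hy.
split; first by exists {fraction PR}; exact: embed2.
move=> [|[|//]] _ F [rho [hu hc hf]].
  apply: (nontriv1 e_sym e_irr (x := x)); apply: hf.
  by apply/matrixP => [[]].
apply: (nontriv2 e_sym e_irr nxy nexy); apply: hf; apply: comm_eval => //.
by apply/matrixP => i j; rewrite !mxE !big_ord1 !ord1 mulrC.
Qed.
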